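(* Let $G=(V,E)$ be a strongly connected digraph and $s\in V$. Then every auxiliary graph $G_r$ (for $r$ the root of a subtree $T(r)$ that is not a leaf of $D(s)$) is strongly connected.
   Context: For a digraph $G=(V,E)$ and $s\in V$ with every vertex reachable from $s$: $u$ dominates $w$ in the flow graph $G(s)$ if every path from $s$ to $w$ contains $u$; the dominator tree $D(s)$ is the rooted tree on $V$ with root $s$ in which $u$ is an ancestor of $w$ iff $u$ dominates $w$; $d(w)$ is the parent of $w\neq s$. An edge $(u,w)$ is a bridge of $G(s)$ if every path from $s$ to $w$ contains it (then $u=d(w)$). A vertex $w\neq s$ is marked if $(d(w),w)$ is a bridge. Deleting from $D(s)$ all edges $(d(w),w)$ with $w$ marked decomposes $D(s)$ into subtrees rooted at $s$ or at marked vertices; $T(v)$ is the subtree containing $v$. A vertex $x\in T(r)$ is a boundary vertex of $T(r)$ if $x$ has a marked child in $D(s)$. Auxiliary graph: for a subtree root $r$ that is not a leaf of $D(s)$, $G_r=(V_r,E_r)$ has ordinary vertices $V_r^o$ = the vertices of $T(r)$ and auxiliary vertices $V_r^a$ consisting of: a copy of each marked child $z$ of each boundary vertex $x$ of $T(r)$ (with the edge $(x,z)$ in $E_r$), and, if $r\neq s$, a copy of $d(r)$ (with the edge $(d(r),r)$ in $E_r$). $E_r$ further contains all edges of $E$ with both endpoints in $T(r)$, plus the following shortcut edges, for each $(u,v)\in E$: (a) if $u\in T(r)$ and $v$ is not a descendant of $r$ in $D(s)$, the edge $(u,d(r))$; (b) if $v\in T(r)$ and $u$ is a descendant in $D(s)$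 of a marked child $z$ of a boundary vertex of $T(r)$, the edge $(z,v)$; (c) if $u$ is a descendant in $D(s)$ of a marked child $z$ of a boundary vertex of $T(r)$ and $v$ is not a descendant of $r$ in $D(s)$, the edge $(z,d(r))$. Parallel duplicate edges are not kept. *)

(* Defs.v *)
From mathcomp Require Import all_boot.
From Stdlib Require Import Relations.
Set Implicit Arguments. Unset Strict Implicit. Unset Printing Implicit Defensive.

Section Dominators.
Variables (V : finType) (E : rel V) (s : V).

Definition strongly_connected : Prop := forall x y : V, connect E x y.

Definition dominates (u w : V) : Prop :=
  forall p : seq V, path E s p -> last s p = w -> u \in s :: p.

(* u = d(w): u is the parent of w in the dominator tree D(s), i.e. the
   immediate dominator of w (the proper dominator of w dominated by all
   proper dominators of w). *)
Definition idom (u w : V) : Prop :=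
  u <> w /\ dominates u w /\ (forall x, dominates x w -> x <> w -> dominates x u).

Definition bridge (u w : V) : Prop :=
  E u w /\
  forall p : seq V, path E s p -> last s p = w -> infix [:: u; w] (s :: p).

Definition marked (w : V) : Prop :=
  w <> s /\ exists u, idom u w /\ bridge u w.

Definition subtree_root (r : V) : Prop := r = s \/ marked r.

Definition inT (r v : V) : Prop :=
  dominates r v /\
  (forall z, marked z -> z <> r -> dominates r z -> ~ dominates z v).

Definition aux_child (r z : V) : Prop :=
  marked z /\ exists x, inT r x /\ idom x z.

(* vertex set V_r of G_r (as a subset of V: the auxiliary vertices, i.e. the
   marked children of boundary vertices and d(r), are not in T(r), so the
   "copies" are represented by the vertices themselves). *)
Definition Vr (r x : V) : Prop :=
  inT r x \/ aux_child r x \/ (r <> s /\ idom x r).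

Definition Er (r x y : V) : Prop :=
  (inT r x /\ inT r y /\ E x y)
  \/ (inT r x /\ idom x y /\ marked y)
  \/ (r <> s /\ idom x r /\ y = r)
  \/ (inT r x /\ idom y r /\ exists v, E x v /\ ~ dominates r v)
  \/ (aux_child r x /\ inT r y /\ exists u, E u y /\ dominates x u)
  \/ (aux_child r x /\ idom y r /\
      exists u v, E u v /\ dominates x u /\ ~ dominates r v).

(* G_r is strongly connected: every vertex of V_r reaches every other one
   using edges of E_r (which only join vertices of V_r). *)
Definition aux_strongly_connected (r : V) : Prop :=
  forall x y, Vr r x -> Vr r y -> clos_refl_trans V (Er r) x y.

End Dominators.

(* Main.v *)
Require Import Defs.
From mathcomp Require Import all_boot.
From Stdlib Require Import Relations Classical.

Set Implicit Arguments. Unset Strict Implicit. Unset Printing Implicit Defensive.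

Section Proofs.
Variables (V : finType) (E : rel V) (s : V).
Hypothesis sc : strongly_connected E.

Local Notation dom := (dominates E s).

Lemma reach w : exists p, path E s p /\ last s p = w.
Proof. by case/connectP: (sc s w) => p pp ->; exists p. Qed.

Lemma notdom u w : ~ dom u w ->
  exists p, path E s p /\ last s p = w /\ u \notin s :: p.
Proof.
move=> H; apply: NNPP => H2; apply: H => p pp lp.
case: (boolP (u \in s :: p)) => // Hn; exfalso; apply: H2; exists p; split=> //.
Qed.

Lemma pref x0 p x : path E x0 p -> x \in x0 :: p ->
  exists q, path E x0 q /\ last x0 q = x /\
    forall a, a \in x0 :: q -> index a (x0 :: p) <= index x (x0 :: p).
Proof.
elim: p x0 => [|h t IH] x0 /=.
  move=> _; rewrite inE => /eqP->; exists [::]; split=> //; split=> //.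
  by move=> a; rewrite inE => /eqP->; rewrite /= eqxx.
move=> /andP[e pt] xin; case: (x0 =P x) => [<-|nx].
  exists [::]; split=> //; split=> //.
  by move=> a; rewrite inE => /eqP->; rewrite /= eqxx.
have xin' : x \in h :: t.
  by move: xin; rewrite inE => /orP[/eqP E1|//]; case: nx.
have [q [pq [lq ind]]] := IH h pt xin'.
exists (h :: q); split; first by rewrite /= e pq.
split=> //= a; rewrite inE => /orP[/eqP->|ain]; first by rewrite eqxx.
case: (x0 =P a) => [//|na].
exact: ind ain.
Qed.

Lemma dom_idx p a b : path E s p -> b \in s :: p -> dom a b ->
  a \in s :: p /\ index a (s :: p) <= index b (s :: p).
Proof.
move=> pp bin dab; have [q [pq [lq ind]]] := pref pp bin.
have ain : a \in s :: q by apply: dab.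
have le := ind a ain; split=> //.
by rewrite -index_mem (leq_ltn_trans le) // index_mem.
Qed.

Lemma dom_refl w : dom w w.
Proof. by move=> p _ <-; apply: mem_last. Qed.

Lemma dom_s w : dom s w.
Proof. by move=> p _ _; rewrite inE eqxx. Qed.

Lemma dom_trans a b c : dom a b -> dom b c -> dom a c.
Proof.
move=> dab dbc p pp lp.
by have [] := dom_idx pp (dbc p pp lp) dab.
Qed.

Lemma dom_antisym a b : dom a b -> dom b a -> a = b.
Proof.
move=> dab dba; have [p [pp lp]] := reach b.
have bin : b \in s :: p by rewrite -lp mem_last.
have [ain le1] := dom_idx pp bin dab.
have [_ le2] := dom_idx pp ain dba.
have eq : index a (s :: p) = index b (s :: p) by apply/eqP; rewrite eqn_leq le1 le2.
by rewrite -(nth_index s ain) -(nth_index s bin) eq.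
Qed.

Lemma dom_lt p a b : path E s p -> b \in s :: p -> dom a b -> a <> b ->
  index a (s :: p) < index b (s :: p).
Proof.
move=> pp bin dab nab; have [ain le1] := dom_idx pp bin dab.
rewrite ltn_neqAle le1 andbT; apply/eqP => eq; apply: nab.
by rewrite -(nth_index s ain) -(nth_index s bin) eq.
Qed.

Lemma suff x0 p x : path E x0 p -> x \in x0 :: p ->
  exists q, path E x q /\ last x q = last x0 p /\ x \notin q /\ {subset q <= p}.
Proof.
elim: p x0 => [|h t IH] x0 /=.
  by move=> _; rewrite inE => /eqP->; exists [::].
move=> /andP[e pt] xin; case: (boolP (x \in h :: t)) => xin'.
  have [q [pq [lq [nq sq]]]] := IH h pt xin'.
  exists q; split=> //; split=> //; split=> // y yq.
  by rewrite inE (sq y yq) orbT.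
have /eqP -> : x == x0.
  by move: xin; rewrite inE => /orP[//|H]; rewrite H in xin'.
exists (h :: t); split; first by rewrite /= e pt.
split=> //; split=> //; rewrite -(eqP (_ : x == x0)) //.
by move: xin; rewrite inE => /orP[//|H]; rewrite H in xin'.
Qed.

Lemma dom_chain a b y : dom a y -> dom b y -> dom a b \/ dom b a.
Proof.
move=> day dby; case: (classic (dom a b)) => H1; first by left.
case: (classic (dom b a)) => H2; first by right.
exfalso.
have [P [pP [lP nP]]] := notdom H1.
have [Q [pQ [lQ nQ]]] := notdom H2.
have [R [pR lR]] := reach y.
have bR := dby R pR lR.
have [q1 [pq1 [lq1 [nq1 sq1]]]] := suff pR bR.
case: (boolP (a \in q1)) => aq1.
  have ab1 : a \in b :: q1 by rewrite inE aq1 orbT.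
  have [q2 [pq2 [lq2 [nq2 sq2]]]] := suff pq1 ab1.
  have H := dby (Q ++ q2).
  rewrite cat_path pQ lQ pq2 last_cat lQ lq2 lq1 lR in H.
  have := H isT erefl; rewrite -cat_cons mem_cat (negPf nQ) /=.
  case: (boolP (b \in q2)) => // bq2; by rewrite (sq2 _ bq2) in nq1.
have H := day (P ++ q1).
rewrite cat_path pP lP pq1 last_cat lP lq1 lR in H.
by have := H isT erefl; rewrite -cat_cons mem_cat (negPf nP) (negPf aq1).
Qed.

Lemma entry x y z : dom z y -> ~ dom z x -> E x y -> y = z.
Proof.
move=> dzy ndzx exy; have [P [pP [lP nP]]] := notdom ndzx.
have H := dzy (rcons P y).
rewrite rcons_path pP lP exy last_rcons in H.
have := H isT erefl; rewrite -rcons_cons mem_rcons inE (negPf nP) orbF.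
by move/eqP.
Qed.

Lemma brg (x : V) c u z : z \notin x :: c -> infix [:: u; z] (rcons (x :: c) z) ->
  u = last x c.
Proof.
elim: c x => [|h t IH] x /=.
  rewrite inE => nz; rewrite andbF orbF /= andbT => /andP[/eqP -> _] //.
rewrite !inE negb_or => /andP[nzx nzht].
case/or3P.
- by case/and3P => _ /eqP E1; move: nzht; rewrite E1 eqxx.
- case/andP => /eqP -> ; case: t IH nzht => //= h' t' _.
  by rewrite !inE => nz /andP[/eqP E1 _]; move: nz; rewrite E1 eqxx !orbT.
- move=> H; apply: IH; first by rewrite inE.
  by rewrite rcons_cons; apply: (infix_trans H); apply: infix_cons.
Qed.

Lemma bridge_entry x u z : bridge E s u z -> ~ dom z x -> E x z -> x = u.
Proof.
move=> [_ br] ndzx exz; have [P [pP [lP nP]]] := notdom ndzx.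
have H := br (rcons P z).
rewrite rcons_path pP lP exz last_rcons in H.
have := H isT erefl; rewrite -rcons_cons => /(brg nP).
by rewrite lP.
Qed.

Lemma idom_uniq u1 u2 w : idom E s u1 w -> idom E s u2 w -> u1 = u2.
Proof.
move=> [n1 [d1 h1]] [n2 [d2 h2]].
by apply: dom_antisym; [apply: h2 | apply: h1].
Qed.

Variable r : V.
Hypothesis Hr : subtree_root E s r.

Definition proj (y p : V) : Prop :=
  (inT E s r y /\ p = y) \/ (aux_child E s r p /\ dom p y) \/
  (~ dom r y /\ idom E s p r).

Lemma aux_facts z : aux_child E s r z -> dom r z /\ z <> r /\ marked E s z.
Proof.
move=> [mz [x [[drx _] [nxz [dxz _]]]]].
split; first exact: dom_trans drx dxz.
split=> // ezr; apply: nxz; apply: dom_antisym => //.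
by rewrite -ezr in drx.
Qed.

Lemma region_notT z y : aux_child E s r z -> dom z y -> ~ inT E s r y.
Proof.
move=> az dzy [_ H]; have [drz [nzr mz]] := aux_facts az.
exact: H z mz nzr drz dzy.
Qed.

Lemma region_uniq z1 z2 y : aux_child E s r z1 -> aux_child E s r z2 ->
  dom z1 y -> dom z2 y -> z1 = z2.
Proof.
move=> a1 a2 d1 d2.
have key : forall za zb, aux_child E s r za -> aux_child E s r zb ->
    dom za zb -> za = zb.
  move=> za zb aa ab dab; apply: NNPP => nab.
  have [drza [nzar mza]] := aux_facts aa.
  case: ab => mzb [x [[_ Hx] [nxzb [dxzb hx]]]].
  apply: (Hx za mza nzar drza); apply: hx => //.
have [] := dom_chain d1 d2 => H; [exact: key H | symmetry; exact: key H].
Qed.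

Lemma proj_fun y p1 p2 : proj y p1 -> proj y p2 -> p1 = p2.
Proof.
case=> [[t1 ->]|[[a1 d1]|[n1 i1]]]; case=> [[t2 ->]|[[a2 d2]|[n2 i2]]] //.
- by case: (region_notT a2 d2 t1).
- by case: n2; case: t1.
- by case: (region_notT a1 d1 t2).
- exact: region_uniq a1 a2 d1 d2.
- by case: n2; apply: dom_trans (proj1 (aux_facts a1)) d1.
- by case: n1; case: t2.
- by case: n1; apply: dom_trans (proj1 (aux_facts a2)) d2.
- exact: idom_uniq i1 i2.
Qed.

Lemma Vr_proj a : Vr E s r a -> proj a a.
Proof.
case=> [t|[ax|[nrs ia]]].
- by left.
- by right; left; split=> //; apply: dom_refl.
- right; right; split=> // dra; case: ia => nar [dar _].
  by apply: nar; apply: dom_antisym.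
Qed.

Lemma proj_total y : exists p, proj y p.
Proof.
case: (classic (dom r y)) => dry; last first.
  case: Hr => [ers|[_ [u [iu _]]]].
    by case: dry; rewrite ers; apply: dom_s.
  by exists u; right; right.
case: (classic (inT E s r y)) => ty; first by exists y; left.
have [z [mz [nzr [drz dzy]]]] : exists z, marked E s z /\ z <> r /\ dom r z /\ dom z y.
  apply: NNPP => Hno; apply: ty; split=> // z mz nzr drz dzy.
  by apply: Hno; exists z.
have [R [pR lR]] := reach y.
suff : forall n z, index z (s :: R) < n -> marked E s z -> z <> r -> dom r z ->
    dom z y -> exists z', aux_child E s r z' /\ dom z' y.
  move=> H; have [z' [a d]] := H _ z (ltnSn _) mz nzr drz dzy.
  by exists z'; right; left.
elim=> [//|n IH] z0 lt m0 n0 d0 d0y.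
have m0' := m0; case: m0' => nz0s [u [[nuz [duz hu]] bu]].
have dru : dom r u by apply: hu => //; move=> e; apply: n0; rewrite e.
case: (classic (inT E s r u)) => tu.
  by exists z0; split=> //; split=> //; exists u.
have [z1 [m1 [n1 [d1 d1u]]]] : exists z, marked E s z /\ z <> r /\ dom r z /\ dom z u.
  apply: NNPP => Hno; apply: tu; split=> // w mz' nzr' drz' dzu.
  by apply: Hno; exists w.
have d1z : dom z1 z0 := dom_trans d1u duz.
have n10 : z1 <> z0.
  by move=> e; apply: nuz; apply: dom_antisym => //; rewrite -e.
have z0R : z0 \in s :: R by apply: d0y.
apply: (IH z1) => //; last exact: dom_trans d1z d0y.
by apply: leq_trans (dom_lt pR z0R d1z n10) _.
Qed.

Lemma edge_proj x y px py : E x y -> proj x px -> proj y py ->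
  clos_refl_trans V (Er E s r) px py.
Proof.
move=> exy; case=> [[tx ->]|[[ax dx]|[nx ix]]]; case=> [[ty ->]|[[ay dy]|[ny iy]]].
- by apply: rt_step; left.
- have [dry [nyr my]] := aux_facts ay.
  have ndx : ~ dom py x by case: tx => _ H; apply: H.
  have eyp := entry dy ndx exy; rewrite eyp in exy.
  have my' := my; case: my' => _ [u [iu bu]].
  have exu := bridge_entry bu ndx exy; rewrite exu.
  by apply: rt_step; right; left; split=> //; rewrite -exu.
- by apply: rt_step; right; right; right; left; split=> //; split=> //; exists y.
- by apply: rt_step; right; right; right; right; left; split=> //; split=> //; exists x.
- case: (classic (dom py x)) => dpx.
    by rewrite (region_uniq ax ay dx dpx); apply: rt_refl.
  have eyp := entry dy dpx exy; rewrite eyp in exy.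
  case: (ay) => my [x2 [t2 i2]].
  case: my => _ [u [iu bu]].
  have exu := bridge_entry bu dpx exy.
  have ex2 : x = x2 by rewrite exu; apply: idom_uniq iu i2.
  by case: (region_notT ax dx); rewrite ex2.
- apply: rt_step; right; right; right; right; right; split=> //; split=> //.
  by exists x, y.
- have dry : dom r y by case: ty.
  have eyr := entry dry nx exy.
  apply: rt_step; right; right; left; split; last by split.
  by move=> ers; apply: nx; rewrite ers; apply: dom_s.
- have [dry [nyr my]] := aux_facts ay.
  have ey := entry (dom_trans dry dy) nx exy.
  by case: nyr; apply: dom_antisym => //; rewrite -ey.
- by rewrite (idom_uniq ix iy); apply: rt_refl.
Qed.

Lemma walk p x px : path E x p -> proj x px ->
  exists py, proj (last x p) py /\ clos_refl_trans V (Er E s r) px py.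
Proof.
elim: p x px => [|h t IH] x px /=.
  by move=> _ H; exists px; split=> //; apply: rt_refl.
move=> /andP[e pt] Hx; have [ph Hh] := proj_total h.
have [py [Hy R]] := IH h ph pt Hh.
exists py; split=> //; apply: rt_trans R.
exact: edge_proj e Hx Hh.
Qed.

End Proofs.

Theorem mainTheorem9 (V : finType) (E : rel V) (s : V) :
  strongly_connected E ->
  forall r : V, subtree_root E s r ->
  (* r is not a leaf of D(s) *)
  (exists w, idom E s r w) ->
  aux_strongly_connected E s r.
Proof.
move=> sc r Hr _ x y Vx Vy.
have px := Vr_proj sc Vx; have py := Vr_proj sc Vy.
case/connectP: (sc x y) => p pp ly.
have [q [Hq R]] := walk sc Hr pp px.
rewrite -ly in Hq.
by rewrite (proj_fun sc py Hq).
Qed.
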